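(* For any finite alphabet $\mathfrak{G}$, the hook series of $(\mathbf{S}_\bullet(\mathfrak{G}), \mathbf{V})$ satisfies $\langle\mathfrak{t},\mathbf{H}_\mathbf{V}\rangle = \tilde{h}(\mathfrak{t})$ for any $\mathfrak{G}$-tree $\mathfrak{t}$.
   Context: $\mathfrak{G}$ is a finite alphabet (letters with arities $\geq 1$). A $\mathfrak{G}$-tree is either the leaf (the tree with no internal node) or $\mathtt{a}[\mathfrak{s}_1,\dots,\mathfrak{s}_{|\mathtt{a}|}]$, a root decorated by $\mathtt{a}\in\mathfrak{G}$ with children $\mathfrak{s}_1,\dots,\mathfrak{s}_{|\mathtt{a}|}$; $\deg$ counts internal nodes. $\mathbf{S}_\bullet(\mathfrak{G})$ is the set of $\mathfrak{G}$-trees graded by degree. $\mathbf{V}$ is the adjoint (trees being orthonormal) of the linear map $\mathbf{V}^\star$ defined by: $\mathbf{V}^\star$ of the leaf is $0$; $\mathbf{V}^\star(\mathtt{a}[\mathfrak{s},\text{leaf},\dots,\text{leaf}]) = \mathfrak{s}$; and $\mathbf{V}^\star(\mathtt{a}[\mathfrak{s}_1,\dots,\mathfrak{s}_{|\mathtt{a}|}]) = \sum_{j\in[2,|\mathtt{a}|]}\mathtt{a}[\mathfrak{s}_1,\dots,\mathfrak{s}_{j-1},\mathbf{V}^\star(\mathfrak{s}_j),\mathfrak{s}_{j+1},\dots,\mathfrak{s}_{|\mathtt{a}|}]$ when some $\mathfrak{s}_j$, $j\geq 2$, is not the leaf. This graded graph has the leaf as root, and its hook series $\mathbf{H}_\mathbf{V}$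 is defined by $\langle x,\mathbf{H}_\mathbf{V}\rangle = [x=\text{the leaf}] + \langle\mathbf{V}^\star(x),\mathbf{H}_\mathbf{V}\rangle$ (equivalently, the number of paths from the leaf to $x$). The statistic $\tilde{h}$ is defined by $\tilde{h}(\text{leaf}) = 1$ and $\tilde{h}(\mathtt{a}[\mathfrak{s}_1,\dots,\mathfrak{s}_{|\mathtt{a}|}]) = \frac{(\deg(\mathfrak{s}_2)+\cdots+\deg(\mathfrak{s}_{|\mathtt{a}|}))!}{\deg(\mathfrak{s}_2)!\cdots\deg(\mathfrak{s}_{|\mathtt{a}|})!}\prod_{i\in[|\mathtt{a}|]}\tilde{h}(\mathfrak{s}_i)$; it equals the number of linear extensions of the twisted poset on the internal nodes of $\mathfrak{t}$ in which $u\leq' v$ iff $u=v$, or $v$ is a descendant of $u$ not lying in the first subtree of $u$, or $u$ lies in the first subtree of $v$. *)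

(* Defs.v *)
From mathcomp Require Import all_boot.
Set Implicit Arguments. Unset Strict Implicit. Unset Printing Implicit Defensive.

(* G-trees over an alphabet of letters of type G (a finType in the theorem);
   arities are given by a separate function [ar]; a tree is well formed when
   every node labelled a has exactly [ar a] children. *)
Inductive tree (G : Type) : Type :=
| Leaf : tree G
| Node : G -> seq (tree G) -> tree G.
Arguments Leaf {G}.

Section Trees.
Variable G : Type.

Definition is_leaf (t : tree G) : bool := if t is Leaf then true else false.

Fixpoint wf (ar : G -> nat) (t : tree G) : bool :=
  match t with
  | Leaf => true
  | Node a ch => (size ch == ar a) && all (wf ar) ch
  end.

Fixpoint deg (t : tree G) : nat :=
  match t with
  | Leaf => 0
  | Node _ ch => (sumn (map deg ch)).+1
  end.

(* V^star, returned as a formal sum of trees with multiplicities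
   (a list of trees; each occurrence counts with coefficient 1). *)
Fixpoint Vstar (t : tree G) : seq (tree G) :=
  match t with
  | Leaf => [::]
  | Node a ch =>
      match ch with
      | [::] => [::]
      | s1 :: rest =>
          if all is_leaf rest then [:: s1] else
          (fix go (pre : seq (tree G)) (l : seq (tree G)) : seq (tree G) :=
             match l with
             | [::] => [::]
             | s :: l' =>
                 [seq Node a (s1 :: pre ++ y :: l') | y <- Vstar s]
                   ++ go (rcons pre s) l'
             end) [::] rest
      end
  end.

(* <x, H_V> = [x = leaf] + <V^star x, H_V>; V^star lowers the degree by one,
   so recursion with fuel deg x computes it. *)
Fixpoint hookF (n : nat) (t : tree G) : nat :=
  match n with
  | 0 => is_leaf t
  | n'.+1 => is_leaf t + sumn (map (hookF n') (Vstar t))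
  end.

Definition hook (t : tree G) : nat := hookF (deg t) t.

Fixpoint htilde (t : tree G) : nat :=
  match t with
  | Leaf => 1
  | Node _ ch =>
      let rest := behead ch in
      ((sumn (map deg rest))`! %/ foldr muln 1 (map (fun s => (deg s)`!) rest))
        * foldr muln 1 (map htilde ch)
  end.

End Trees.

(* Main.v *)
Require Import Defs.
From mathcomp Require Import all_boot.
From mathcomp Require Import all_algebra ring zify.
Set Implicit Arguments. Unset Strict Implicit. Unset Printing Implicit Defensive.

Section S.
Variable G : Type.
Implicit Types t s y : tree G.

Definition tree_ind' (P : tree G -> Prop) (hL : P Leaf)
  (hN : forall a ch, (forall s, List.In s ch -> P s) -> P (Node a ch)) :
  forall t, P t :=
  fix IH t := match t with
  | Leaf => hL
  | Node a ch => hN a ch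
      ((fix F (l : seq (tree G)) : forall s, List.In s l -> P s :=
         match l with
         | nil => fun s H => False_ind _ H
         | cons x l' => fun s H => match H with
             | or_introl e => eq_ind x P (IH x) s e
             | or_intror H' => F l' s H' end
         end) ch)
  end.

Fixpoint go (a : G) (s1 : tree G) (pre l : seq (tree G)) : seq (tree G) :=
  match l with
  | [::] => [::]
  | s :: l' => [seq Node a (s1 :: pre ++ y :: l') | y <- Vstar s]
                 ++ go a s1 (rcons pre s) l'
  end.

Lemma VstarE a s1 rest : Vstar (Node a (s1 :: rest)) =
  if all (@is_leaf G) rest then [:: s1] else go a s1 [::] rest.
Proof.
simpl; case: ifP => // _. generalize (@nil (tree G)) at 2 3. elim: rest => [|x l IH] pre //=. by rewrite IH.
Qed.

Lemma In_all (p : pred (tree G)) l s : List.In s l -> all p l -> p s.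
Proof. elim: l => //= x l IH [<-|H] /andP[H1 H2]; auto. Qed.

Lemma eq_map_all (p : pred (tree G)) (f g : tree G -> nat) l :
  all p l -> (forall y, p y -> f y = g y) -> map f l = map g l.
Proof. move=> Ha H; elim: l Ha => //= x l IH /andP[h1 h2]; by rewrite H // IH. Qed.

Lemma sumn_mulr l c : sumn l * c = sumn (map (muln^~ c) l).
Proof. elim: l => //= x l <-; by rewrite mulnDl. Qed.

Lemma sumn_mull c (f : tree G -> nat) l :
  sumn [seq c * f y | y <- l] = c * sumn (map f l).
Proof. elim: l => /=[|x l ->]; by rewrite ?muln0 ?mulnDr. Qed.

Definition prodF (l : seq (tree G)) := foldr muln 1 (map (fun s => (deg s)`!) l).
Definition prodH (l : seq (tree G)) := foldr muln 1 (map (@htilde G) l).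
Definition sD (l : seq (tree G)) := sumn (map (@deg G) l).

Lemma foldr_muln_cat (f : tree G -> nat) l1 l2 :
  foldr muln 1 (map f (l1 ++ l2)) = foldr muln 1 (map f l1) * foldr muln 1 (map f l2).
Proof. elim: l1 => /= [|x l IH]; by rewrite ?mul1n // IH mulnA. Qed.

Lemma prodF_cat l1 l2 : prodF (l1 ++ l2) = prodF l1 * prodF l2.
Proof. exact: foldr_muln_cat. Qed.
Lemma prodH_cat l1 l2 : prodH (l1 ++ l2) = prodH l1 * prodH l2.
Proof. exact: foldr_muln_cat. Qed.
Lemma sD_cat l1 l2 : sD (l1 ++ l2) = sD l1 + sD l2.
Proof. by rewrite /sD map_cat sumn_cat. Qed.

Lemma prodF_gt0 l : 0 < prodF l.
Proof. elim: l => //= x l IH; by rewrite muln_gt0 fact_gt0. Qed.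

Lemma prodF_dvd l : prodF l %| (sD l)`!.
Proof.
elim: l => //= x l IH.
rewrite /sD /= -/(sD l).
rewrite -(bin_fact (leq_addr (sD l) (deg x))) addKn.
apply: dvdn_mull. by rewrite dvdn_mul.
Qed.

Lemma htildeE a s1 rest :
  htilde (Node a (s1 :: rest)) = (sD rest)`! %/ prodF rest * (htilde s1 * prodH rest).
Proof. by []. Qed.

Lemma leaves l : all (@is_leaf G) l -> [/\ sD l = 0, prodF l = 1 & prodH l = 1].
Proof.
elim: l => [|[|b ch] l IH] //= H.
have [h1 h2 h3] := IH H. by rewrite /sD /= -/(sD l) h1 /prodF /= -/(prodF l) h2
  /prodH /= -/(prodH l) h3.
Qed.

Lemma nonleaves l : ~~ all (@is_leaf G) l -> 0 < sD l.
Proof.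
elim: l => [|[|b ch] l IH] //= H.
Qed.

Lemma Vstar_deg t : all (fun y => deg y == (deg t).-1) (Vstar t).
Proof.
elim/tree_ind': t => // a [|s1 rest] IH //.
rewrite VstarE; case: ifP => Hl.
  have [h1 _ _] := leaves Hl. rewrite /= andbT.
  by move: h1; rewrite /sD => ->; rewrite addn0.
have: forall pre, all (fun y => deg y == deg s1 + sD (pre ++ rest)) (go a s1 pre rest).
  have IH' : forall s, List.In s rest -> all (fun y => deg y == (deg s).-1) (Vstar s).
    by move=> s Hs; apply: IH; right.
  elim: rest {Hl IH} IH' => // s l' IHl Hs pre.
  rewrite /= all_cat; apply/andP; split.
    rewrite all_map. have := Hs s (or_introl erefl).
    case: s {Hs} => [|b ch] //= H. apply: sub_all H => y /= /eqP Hy.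
    rewrite -/(sD (pre ++ y :: l')) !sD_cat /sD /= -/(sD l') Hy. apply/eqP.
    lia.
  move: (IHl (fun s0 H0 => Hs s0 (or_intror H0)) (rcons pre s)); by rewrite -cats1 -catA.
move=> /(_ [::]) /=.
apply: sub_all => y /= /eqP ->. by rewrite /sD.
Qed.

Lemma go_sum a s1 l : forall pre,
  (forall s, List.In s l -> ~~ is_leaf s -> sumn (map (@htilde G) (Vstar s)) = htilde s) ->
  sumn (map (@htilde G) (go a s1 pre l)) * prodF (pre ++ l)
    = htilde s1 * (sD (pre ++ l)).-1`! * sD l * prodH (pre ++ l).
Proof.
elim: l => [|s l' IH] pre Hs /=; first by rewrite muln0 mul0n.
rewrite map_cat sumn_cat mulnDl.
have := IH (rcons pre s) (fun s0 H0 => Hs s0 (or_intror H0)).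
rewrite -cats1 -catA /= => ->.
have -> : sD (s :: l') = deg s + sD l' by [].
rewrite [_ * (deg s + _)]mulnDr mulnDl; congr (_ + _).
case: s Hs => [|b ch] Hs; first by rewrite /= !muln0 mul0n.
set s := Node b ch.
have Hds : 0 < deg s by []. have Hs' := Hs s (or_introl erefl) isT. clearbody s.
rewrite sumn_mulr -!map_comp.
rewrite (@eq_map_all (fun y => deg y == (deg s).-1) _
   (fun y => deg s * (sD (pre ++ s :: l')).-1`! * htilde s1 * prodH pre * prodH l' * htilde y)
   _ (Vstar_deg s)); last first.
  move=> y /eqP Hy.
  rewrite /comp htildeE.
  have E1 : sD (pre ++ y :: l') = (sD (pre ++ s :: l')).-1.
    rewrite !sD_cat /sD /= -/(sD l') Hy. lia.
  have E2 : prodF (pre ++ s :: l') = deg s * prodF (pre ++ y :: l').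
    rewrite !prodF_cat /prodF /= -/(prodF l') Hy.
    rewrite -{1}(prednK Hds) factS (prednK Hds). ring.
  rewrite -E1 E2 prodH_cat /prodH /= -/(prodH l') -/(prodH pre).
  have Hdv := prodF_dvd (pre ++ y :: l').
  rewrite -{2}(divnK Hdv).
  set q := _ %/ _. set P := prodF _. ring.
rewrite sumn_mull Hs'.
rewrite prodH_cat /prodH /= -/(prodH l') -/(prodH pre). ring.
Qed.

Variable ar : G -> nat.
Hypothesis ar_pos : forall a, 0 < ar a.

Lemma htilde_rec t : wf ar t -> ~~ is_leaf t ->
  sumn (map (@htilde G) (Vstar t)) = htilde t.
Proof.
elim/tree_ind': t => // a ch IH /andP[/eqP Hsz Hall] _.
case: ch Hsz Hall IH => [|s1 rest] Hsz Hall IH.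
  by have := ar_pos a; rewrite -Hsz.
rewrite VstarE; case: ifP => Hl.
  have [h1 h2 h3] := leaves Hl.
  by rewrite htildeE h1 h2 h3 /= addn0 divn1 muln1 mul1n.
move: Hall => /= /andP[_ Hall].
have := @go_sum a s1 rest [::] (fun s Hs Hnl => IH s (or_intror Hs) (In_all Hs Hall) Hnl).
rewrite cat0s => Hg.
apply/eqP; rewrite -(eqn_pmul2r (prodF_gt0 rest)); apply/eqP.
rewrite Hg -/(sD rest) -/(prodF rest) -/(prodH rest).
have Hpos := nonleaves (negbT Hl).
have Hq := esym (divnK (prodF_dvd rest)).
move: (_ %/ _) Hq => q. move: Hpos. case: (sD rest) => // k _. rewrite factS => Hq.
rewrite [LHS](_ : _ = htilde s1 * (k.+1 * k`!) * prodH rest); last by rewrite /=; ring.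
rewrite Hq; ring.
Qed.

Lemma go_wf a s1 l : forall pre,
  (forall s, List.In s l -> wf ar s -> all (wf ar) (Vstar s)) ->
  wf ar (Node a (s1 :: pre ++ l)) -> all (wf ar) (go a s1 pre l).
Proof.
elim: l => [|s l' IHl] pre Hs Hw //=.
rewrite all_cat; apply/andP; split.
  rewrite all_map.
  move: Hw => /= /andP[/eqP Hsz /andP[Hw1 Hw2]].
  move: Hw2; rewrite all_cat /= => /and3P[Hp Hs0 Hl'].
  apply: sub_all (Hs s (or_introl erefl) Hs0) => y Hy /=.
  by rewrite -Hsz !size_cat /= eqxx Hw1 all_cat Hp /= Hy Hl'.
apply: IHl => [s0 H0|]; first by apply: Hs; right.
by rewrite -cats1 -catA.
Qed.

Lemma Vstar_wf t : wf ar t -> all (wf ar) (Vstar t).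
Proof.
elim/tree_ind': t => // a [|s1 rest] IH // Hw.
rewrite VstarE; case: ifP => Hl.
  by move: Hw => /= /andP[_ /andP[-> _]].
apply: go_wf => // s Hs; apply: IH; by right.
Qed.

Lemma hookFS n t : hookF n.+1 t = is_leaf t + sumn (map (hookF n) (Vstar t)).
Proof. by []. Qed.

Lemma hookF_eq n : forall t, wf ar t -> deg t <= n -> hookF n t = htilde t.
Proof.
elim: n => [|n IHn] t Hwf Hd.
  by case: t Hwf Hd.
rewrite hookFS.
case: t Hwf Hd => [|a ch] Hwf Hd; first by [].
rewrite add0n -(htilde_rec Hwf isT).
congr sumn.
apply: (@eq_map_all (fun y => wf ar y && (deg y == (deg (Node a ch)).-1))).
  by rewrite all_predI Vstar_wf // Vstar_deg.
move=> y /andP[Hy /eqP Hdy]. apply: IHn => //. rewrite Hdy. move: Hd => /=. lia.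
Qed.
End S.

Theorem proposition2p6 (G : finType) (ar : G -> nat)
    (ar_pos : forall a : G, 0 < ar a) (t : tree G) :
  wf ar t -> hook t = htilde t.
Proof. move=> Hw. exact: (hookF_eq ar_pos Hw (leqnn _)). Qed.
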